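(* Let $n\ge1$, let $G^\star=([n],E^\star)$ be a directed graph (directed cycles allowed), and let $S_1=\operatorname{argmin}_{\mathcal S}|E^{(1)}|$, $S_2=\operatorname{argmin}_{S_1}|E^{(2)}|$, $S_3=\operatorname{argmin}_{(\mathcal P,\pi)\in S_2}|E^{(3)}_{(\mathcal P,\pi)}|$. Then (i) the partially ordered partition associated with $G^\star$ belongs to $S_3$, and (ii) for every $(\mathcal P,\pi)\in S_3$, $E^{(3)}_{(\mathcal P,\pi)}$ equals the set of unshielded perfect non-conductors in $G^\star$.
   Context: $[n]=\{1,\dots,n\}$. The observed distribution is Markov and faithful to $G^\star$; for distinct $a,b$ and $Z\subseteq[n]\setminus\{a,b\}$, $a\perp\!\!\!\perp b\mid Z$ means $a$ and $b$ are $d$-separated given $Z$ in $G^\star$, and $a\not\perp\!\!\!\perp b\mid Z$ is its negation. In a directed graph, $a$ is an ancestor of $b$ (and $b$ a descendant of $a$) if $a=b$ or there is a directed path from $a$ to $b$. Distinct $a,b$ are $p$-adjacent in a directed graph $G$ if there is an edge between them, or they have a common child which is an ancestor of $a$ or of $b$. A triple $(a,b,c)$ such that $a,c$ are not $p$-adjacent while $a,b$ and $c,b$ are $p$-adjacent is an unshielded conductor if $b$ is an ancestor of $a$ or of $c$, and an unshielded non-conductor otherwise; an unshielded non-conductor $(a,b,c)$ is perfect if $b$ is a descendant of a common child of $a$ and $c$, and imperfect otherwise. $\mathcal S$ is the set of pairs $(\mathcal P,\pi)$ with $\mathcal P$ a partition of $[n]$ and $\pi$ a partial order on $\mathcal P$;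 $C_1\le_\pi C_2$ iff $(C_1,C_2)\in\pi$; $C_{i,\mathcal P}$ is the block containing $i$; $C\le_\pi\max\{C_1,\dots,C_t\}$ means $C\le_\pi C_i$ for some $i$. The strongly connected components of a directed graph $G$ are the classes of $i\sim j$ iff $i=j$ or there are directed paths $i\to j$ and $j\to i$; on them $C_1\le_G C_2$ iff $C_1=C_2$ or there is a directed path from a vertex of $C_1$ to a vertex of $C_2$. The partially ordered partition associated with $G$ is (its set of strongly connected components, $\le_G$). For $(\mathcal P,\pi)\in\mathcal S$: $E^{(1)}_{(\mathcal P,\pi)}=\{(a,b): a\ne b,\ a\not\perp\!\!\!\perp b\mid\bigcup\{C\in\mathcal P: C\le_\pi\max\{C_{a,\mathcal P},C_{b,\mathcal P}\}\}\setminus\{a,b\}\}$; $E^{(2)}_{(\mathcal P,\pi)}$ is the set of $(a,b,c)$ distinct with $(a,b),(c,b)\in E^{(1)}$, $(a,c)\notin E^{(1)}$, $C_{b,\mathcal P}\le_\pi\max\{C_{a,\mathcal P},C_{c,\mathcal P}\}$; $E^{(3)}_{(\mathcal P,\pi)}$ is the set of $(a,b,c)$ distinct with $(a,b),(c,b)\in E^{(1)}$, $(a,c)\notin E^{(1)}$, and $a\not\perp\!\!\!\perp c\mid\bigcup\{C\in\mathcal P: C\le_\pi\max\{C_{a,\mathcal P},C_{b,\mathcal P},C_{c,\mathcal P}\}\}\setminus\{a,c\}$ (all $E$-sets indexed by $(\mathcal P,\pi)$). *)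

(* Defs.v *)
From mathcomp Require Import all_boot.
From Stdlib Require Import ClassicalEpsilon.
Set Implicit Arguments. Unset Strict Implicit. Unset Printing Implicit Defensive.

Definition pb (P : Prop) : bool := if excluded_middle_informative P then true else false.

Section Defs.
Variable T : finType.
Implicit Types (E : rel T) (Z : {set T}) (a b c : T).

Definition ancestor E a b : bool := connect E a b.

(* A path between a and b: distinct vertices vs = [v_0 = a; ...; v_k = b] and
   edges given by orientations os (size k): if os_i, the edge is v_i -> v_{i+1},
   otherwise v_{i+1} -> v_i. *)
Definition d_connected E Z a b : Prop :=
  exists (vs : seq T) (os : seq bool),
    [/\ size vs = (size os).+1, nth a vs 0 = a, nth a vs (size os) = b & uniq vs] /\
    (
        (forall i, i < size os ->
           if nth false os i then E (nth a vs i) (nth a vs i.+1)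
           else E (nth a vs i.+1) (nth a vs i)) /\
        (forall i, 0 < i < size os ->
           if nth false os i.-1 && ~~ nth false os i
           then [exists z in Z, ancestor E (nth a vs i) z]
           else nth a vs i \notin Z)).

Definition d_separated E Z a b : Prop := ~ d_connected E Z a b.

(* candidate partially ordered partitions: s.1 = partition P, s.2 = order pi *)
Definition ppo := ({set {set T}} * {set ({set T} * {set T})})%type.

Definition is_ppo (s : ppo) : Prop :=
  [/\ partition s.1 [set: T],
      (forall C1 C2, (C1, C2) \in s.2 -> (C1 \in s.1) && (C2 \in s.1)),
      (forall C, C \in s.1 -> (C, C) \in s.2),
      (forall C1 C2, (C1, C2) \in s.2 -> (C2, C1) \in s.2 -> C1 = C2) &
      (forall C1 C2 C3, (C1, C2) \in s.2 -> (C2, C3) \in s.2 -> (C1, C3) \in s.2)].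

Definition below (s : ppo) (xs : seq T) : {set T} :=
  \bigcup_(C in s.1 | has (fun x => (C, pblock s.1 x) \in s.2) xs) C.

Definition E1 E (s : ppo) : {set T * T} :=
  [set p : T * T | (p.1 != p.2) &&
     pb ( ~ d_separated E (below s [:: p.1; p.2] :\: [set p.1; p.2]) p.1 p.2 )].

Definition E2 E (s : ppo) : {set T * T * T} :=
  [set t : T * T * T | let: (a, b, c) := t in
     [&& a != b, b != c, a != c, (a, b) \in E1 E s, (c, b) \in E1 E s,
         (a, c) \notin E1 E s &
         ((pblock s.1 b, pblock s.1 a) \in s.2) || ((pblock s.1 b, pblock s.1 c) \in s.2)]].

Definition E3 E (s : ppo) : {set T * T * T} :=
  [set t : T * T * T | let: (a, b, c) := t in
     [&& a != b, b != c, a != c, (a, b) \in E1 E s, (c, b) \in E1 E s,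
         (a, c) \notin E1 E s &
         pb ( ~ d_separated E (below s [:: a; b; c] :\: [set a; c]) a c )]].

Definition S1 E (s : ppo) : Prop :=
  is_ppo s /\ forall t, is_ppo t -> #|E1 E s| <= #|E1 E t|.
Definition S2 E (s : ppo) : Prop :=
  S1 E s /\ forall t, S1 E t -> #|E2 E s| <= #|E2 E t|.
Definition S3 E (s : ppo) : Prop :=
  S2 E s /\ forall t, S2 E t -> #|E3 E s| <= #|E3 E t|.

Definition scc E a : {set T} := [set x | ancestor E a x && ancestor E x a].
Definition graph_ppo E : ppo :=
  ([set scc E x | x : T],
   [set C : {set T} * {set T} |
      [&& C.1 \in [set scc E x | x : T], C.2 \in [set scc E x | x : T] &
          [exists x in C.1, exists y in C.2, ancestor E x y]]]).

Definition p_adjacent E a b : bool :=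
  (a != b) && [|| E a b, E b a |
     [exists d, [&& E a d, E b d & ancestor E d a || ancestor E d b]]].

Definition unshielded_perfect_nonconductors E : {set T * T * T} :=
  [set t : T * T * T | let: (a, b, c) := t in
     [&& a != c, ~~ p_adjacent E a c, p_adjacent E a b, p_adjacent E c b,
         ~~ (ancestor E b a || ancestor E b c) &
         [exists d, [&& E a d, E c d & ancestor E d b]]]].

End Defs.

(* Main.v *)
Require Import Defs.
From mathcomp Require Import all_boot zify.
From Stdlib Require Import ClassicalEpsilon.
Set Implicit Arguments. Unset Strict Implicit. Unset Printing Implicit Defensive.

Section Walks.
Variable T : finType.
Variable E : rel T.
Variable Z : {set T}.

Definition AnZ (x : T) : bool := [exists z in Z, ancestor E x z].
Definition jn (l r : bool) (v : T) : bool := if l && ~~ r then AnZ v else v \notin Z.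
Definition edg (o : bool) (x y : T) : bool := if o then E x y else E y x.
Arguments jn : simpl never.
Arguments edg : simpl never.

Definition Wf (s : seq T) (os : seq bool) : Prop :=
  size s = (size os).+1 /\
  (forall i x0, i < size os -> edg (nth false os i) (nth x0 s i) (nth x0 s i.+1)) /\
  (forall i x0, 0 < i < size os -> jn (nth false os i.-1) (nth false os i) (nth x0 s i)).

Definition W a vs os c := Wf (a :: vs) os /\ last a vs = c.

Lemma W_nil a : W a [::] [::] a.
Proof. by split => //; split => //; split => // i x0; rewrite ltn0 ?andbF. Qed.

Lemma W_cons a b o vs os c : edg o a b -> W b vs os c ->
  (0 < size os -> jn o (nth false os 0) b) -> W a (b :: vs) (o :: os) c.
Proof.
move=> eab [[sz [He Hc]] Hl] Hj; split => //; split; first by move: sz => /= [->].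
split.
- move=> [|i] x0 /= Hi; first by [].
  exact: He.
- move=> [|[|i]] x0 //= Hi.
  + by have := Hc i.+1 x0; apply.
Qed.

Lemma W_uncons a b o vs os c : W a (b :: vs) (o :: os) c ->
  [/\ edg o a b, W b vs os c & (0 < size os -> jn o (nth false os 0) b)].
Proof.
move=> [[sz [He Hc]] Hl]; split.
- by apply: (He 0 a).
- split => //; split; first by move: sz => /= [->].
  split.
  + by move=> i x0 Hi; have := He i.+1 x0; apply.
  + move=> [|i] x0 // Hi; by have := Hc i.+2 x0; apply.
- by move=> Hs; have := Hc 1 a; apply.
Qed.

Lemma W_size a vs os c : W a vs os c -> size vs = size os.
Proof. by case=> [[/= [] ]]. Qed.

Lemma W_nil_inv a os c : W a [::] os c -> os = [::] /\ a = c.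
Proof. by case=> [[/= sz _] <-]; case: os sz. Qed.

Lemma W_cat a b c vs1 os1 vs2 os2 : W a vs1 os1 b -> W b vs2 os2 c ->
  (0 < size os1 -> 0 < size os2 -> jn (last false os1) (nth false os2 0) b) ->
  W a (vs1 ++ vs2) (os1 ++ os2) c.
Proof.
elim: vs1 a os1 => [|v vs1 IH] a os1 H1 H2 Hj.
  by have [-> eab] := W_nil_inv H1; subst.
have := W_size H1; case: os1 H1 Hj => [|o os1] // H1 Hj _.
have [e1 W1 j1] := W_uncons H1.
apply: W_cons => //.
  apply: IH => // s1 s2; move: (Hj isT s2); clear -s1.
  by case: os1 s1.
move=> Hs; clear H1; case: os1 Hs j1 W1 Hj => [|o' os1] Hs j1 W1 Hj /=; last by apply: j1.
have := W_size W1; case: vs1 IH W1 => // IH W1 _; have [_ eb] := W_nil_inv W1; subst v.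
exact: (Hj isT Hs).
Qed.


Lemma edgP o x y : edg o x y = (if o then E x y else E y x).
Proof. by []. Qed.

Lemma jnP l r v : jn l r v = (if l && ~~ r then AnZ v else v \notin Z).
Proof. by []. Qed.

Lemma AnZ_trans x y : ancestor E x y -> AnZ y -> AnZ x.
Proof.
move=> axy /existsP[z /andP[zZ ayz]]; apply/existsP; exists z.
by rewrite zZ; exact: connect_trans axy ayz.
Qed.

Lemma dir_fwd p u : path E u p -> (forall w, w \in p -> w \notin Z) ->
  W u p (nseq (size p) true) (last u p).
Proof.
elim: p u => [|w p IH] u /=; first by move=> *; apply: W_nil.
move=> /andP[euw pw] Hz; apply: W_cons => //.
  by apply: IH => // x xp; apply: Hz; rewrite inE xp orbT.
move=> Hs; rewrite size_nseq in Hs; rewrite nth_nseq Hs jnP /=; apply: Hz; exact: mem_head.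
Qed.

Lemma dir_bwd p u : path E u p -> (forall w, w \in p -> w \notin Z) ->
  exists2 os, W (last u p) (rev (belast u p)) os u & all negb os.
Proof.
elim: p u => [|w p IH] u /=; first by move=> *; exists [::] => //; apply: W_nil.
move=> /andP[euw pw] Hz.
have [os W1 Hn] := IH w pw (fun x xp => Hz x (@mem_behead _ (w :: p) _ xp)).
exists (os ++ [:: false]); last by rewrite all_cat Hn.
rewrite rev_cons -cats1; apply: W_cat W1 _ _.
  by apply: W_cons => //; apply: W_nil.
move=> s1 _; rewrite jnP.
have : last false os \in false :: os by exact: mem_last.
have : all negb (false :: os) by rewrite /= Hn.
move=> /allP H /H /negbTE -> /=; apply: Hz; exact: mem_head.
Qed.

Lemma chainR s os x0 k : Wf s os -> k <= size os -> forall d m, k - m = d -> m < k -> nth false os m ->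
  exists p, [/\ m < p <= k, ancestor E (nth x0 s m) (nth x0 s p), nth false os p.-1 &
     (p = k \/ (p < k /\ ~~ nth false os p))].
Proof.
move=> [sz [He Hc]] Hk; elim=> [|d IH] m Hd Hm Hos; first by lia.
have e1 : E (nth x0 s m) (nth x0 s m.+1).
  by have := He m x0; rewrite edgP Hos; apply; lia.
have [Hm1|Hm1] := boolP (m.+1 == k).
  exists m.+1; split => //; [lia| exact: connect1 | by left; apply/eqP].
case Ho: (nth false os m.+1).
  have [p [H1 H2 H3 H4]] := IH m.+1 ltac:(lia) ltac:(lia) Ho.
  exists p; split => //; first by lia.
  exact: connect_trans (connect1 e1) H2.
exists m.+1; split => //; [lia| exact: connect1 | right; split; [lia| by rewrite Ho]].
Qed.

Lemma chainL s os x0 : Wf s os -> forall m, m <= size os -> 0 < m -> ~~ nth false os m.-1 ->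
  exists p, [/\ p < m, ancestor E (nth x0 s m) (nth x0 s p), ~~ nth false os p &
     (p = 0 \/ (0 < p /\ nth false os p.-1))].
Proof.
move=> [sz [He Hc]]; elim=> [|m IH] // Hk _ Ho /=.
have e1 : E (nth x0 s m.+1) (nth x0 s m).
  by have := He m x0; rewrite edgP (negbTE Ho); apply; lia.
case: m IH Hk Ho e1 => [|m] IH Hk Ho e1.
  by exists 0; split => //; [exact: connect1 | left].
case Ho': (nth false os m).
  exists m.+1; split => //; [exact: connect1| right; split => //].
have [p [H1 H2 H3 H4]] := IH ltac:(lia) isT (negbT Ho').
exists p; split => //; first by lia.
exact: connect_trans (connect1 e1) H2.
Qed.

Lemma W_uniq a vs os c : W a vs os c -> exists vs' os', W a vs' os' c /\ uniq (a :: vs').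
Proof.
have [K HK] := ubnP (size os); elim: K vs os HK => // K IH vs os HK Hw.
have [Hu|Hnu] := boolP (uniq (a :: vs)); first by exists vs, os.
have [[sz [He Hc]] Hl] := Hw.
move/(uniqPn a): Hnu => [i [j [Hij Hj Heq]]].
set s := a :: vs in sz He Hc Hl Heq Hj.
have Hk : j <= size os by move: Hj; rewrite sz.
pose vs' := take i vs ++ drop j vs.
pose os' := take i os ++ drop j os.
have Hs' : a :: vs' = take i.+1 s ++ drop j.+1 s by [].
have szos' : size os' = i + (size os - j).
  rewrite /os' size_cat size_take size_drop; case: ifP => ?; lia.
have Nv : forall x0 m, m <= size os' -> nth x0 (a :: vs') m = nth x0 s (if m < i then m else m + (j - i)).
  move=> x0 m Hm; rewrite Hs' nth_cat size_take.
  have -> : (i.+1 < size s) = true by rewrite sz; lia.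
  case: ltnP => H1.
    rewrite nth_take //; case: ltnP => H2 //.
    have -> : m = i by lia.
    rewrite addnC subnK; last by lia.
    by rewrite (set_nth_default a) ?(Heq) ?(set_nth_default x0 a) //; lia.
  rewrite nth_drop; case: ltnP => H2; first by lia.
  congr nth; lia.
have No : forall m, m < size os' -> nth false os' m = nth false os (if m < i then m else m + (j - i)).
  move=> m Hm; rewrite /os' nth_cat size_take.
  have -> : (i < size os) = true by lia.
  case: ltnP => H1; first by rewrite nth_take.
  rewrite nth_drop; congr nth; lia.
have W' : W a vs' os' c.
  split; last first.
    rewrite -Hl.
    have e1 : last a vs' = nth a (a :: vs') (size vs') by rewrite nth_last.
    have e2 : last a vs = nth a s (size vs) by rewrite nth_last.
    have szv' : size vs' = size os'.
      rewrite /vs' size_cat size_take size_drop; move: sz => /= [->].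
      case: ifP => ?; lia.
    rewrite e1 e2 Nv ?szv' //; move: sz => /= [->].
    case: ltnP => H; first by lia.
    congr nth; lia.
  split.
    rewrite /= /vs' size_cat size_take size_drop szos'.
    move: sz => /= [->]; case: ifP => ?; lia.
  split.
    move=> m x0 Hm; rewrite No // !Nv; try lia.
    case: ltnP => H1.
      case: (ltnP m.+1 i) => H2; first by apply: He; lia.
        have -> : m.+1 + (j - i) = j by lia.
        have -> : nth x0 s j = nth x0 s m.+1.
          have -> : m.+1 = i by lia.
          rewrite (set_nth_default a); last by lia.
          by rewrite -Heq (set_nth_default x0) //; lia.
        by apply: He; lia.
    have -> : (m.+1 < i) = false by lia.
    have -> : m.+1 + (j - i) = (m + (j - i)).+1 by lia.
    by apply: He; lia.
  move=> m x0 /andP[Hm0 Hm]; rewrite !No ?Nv; try lia.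
  case: (ltngtP m i) => H1.
  - have -> : (m.-1 < i) = true by lia.
    by apply: Hc; lia.
  - have -> : (m.-1 < i) = false by lia.
    have -> : (m.-1 + (j - i)) = (m + (j - i)).-1 by lia.
    by apply: Hc; lia.
  - subst m.
    have -> : (i.-1 < i) = true by lia.
    have -> : i + (j - i) = j by lia.
    have Hsj : nth x0 s j = nth x0 s i.
      rewrite (set_nth_default a); last by lia.
      by rewrite -Heq (set_nth_default x0); last by lia.
    have Hjk : j < size os by lia.
    rewrite jnP Hsj; case: ifP => Hcol.
    + move/andP: Hcol => [Hl1 Hr].
      case Hoi: (nth false os i).
      * have [p [Hp1 Hp2 Hp3 Hp4]] := chainR x0 (conj sz (conj He Hc)) (ltnW Hjk) (erefl _) Hij Hoi.
        apply: AnZ_trans Hp2 _.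
        case: Hp4 => [Hpj|[Hpj Hnp]].
          subst p.
          by have := Hc j x0; rewrite jnP Hp3 Hr /=; apply; lia.
        by have := Hc p x0; rewrite jnP Hp3 Hnp /=; apply; lia.
      * by have := Hc i x0; rewrite jnP Hl1 Hoi /=; apply; lia.
    + case Hl1: (nth false os i.-1) Hcol => /= Hcol.
      * have Hr : nth false os j by move: Hcol; case: (nth false os j).
        rewrite -Hsj.
        by have := Hc j x0; rewrite jnP Hr andbF /=; apply; lia.
      * by have := Hc i x0; rewrite jnP Hl1 /=; apply; lia.
have [vs2 [os2 [W2 U2]]] := IH vs' os' ltac:(lia) W'.
by exists vs2, os2.
Qed.

Lemma W_dcon a vs os c : W a vs os c -> uniq (a :: vs) -> d_connected E Z a c.
Proof.
move=> [[sz [He Hc]] Hl] U; exists (a :: vs), os; split; first split => //.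
  rewrite -Hl (_ : size os = size vs); last by move: sz => /= [->].
  exact: (nth_last a (a :: vs)).
split; [move=> i Hi; exact: He | move=> i Hi; exact: Hc].
Qed.

Lemma dcon_W a c : d_connected E Z a c -> exists vs os, W a vs os c /\ uniq (a :: vs).
Proof.
move=> [s [os [[sz h0 hk U] [He Hc]]]].
case: s sz h0 hk U He Hc => [|v vs] // sz h0 hk U He Hc.
rewrite /= in h0; subst v.
exists vs, os; split => //; split.
  split => //; split.
    move=> i x0 Hi; rewrite !(set_nth_default a x0) ?sz //; try lia.
    exact: He.
  move=> i x0 Hi; rewrite !(set_nth_default a x0) ?sz //; try lia.
  exact: Hc.
rewrite -hk (_ : size os = size vs); last by move: sz => /= [->].
symmetry; exact: (nth_last a (a :: vs)).
Qed.

Lemma dcon_of_W a vs os c : W a vs os c -> d_connected E Z a c.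
Proof. by move=> /W_uniq [vs' [os' [H U]]]; exact: W_dcon H U. Qed.

Lemma sep_anc (A : {set T}) a c : (forall x y, y \in A -> ancestor E x y -> x \in A) ->
  a \in A -> c \in A -> a != c -> Z = A :\: [set a; c] -> d_connected E Z a c ->
  [\/ E a c, E c a | exists d, [&& d \in A, E a d & E c d]].
Proof.
move=> Acl aA cA ac HZ /dcon_W [vs [os [[[sz [He Hc]] Hl] U]]].
set s := a :: vs in sz He Hc U.
have szv : size vs = size os by move: sz => /= [].
have hk : nth a s (size os) = c by rewrite -Hl -szv; exact: (nth_last a (a :: vs)).
have h0 : nth a s 0 = a by [].
have Wf0 : Wf s os by [].
have ZA : forall z, z \in Z -> z \in A by move=> z; rewrite HZ inE => /andP[].
have AnZA : forall x, AnZ x -> x \in A.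
  by move=> x /existsP[z /andP[/ZA zA axz]]; exact: Acl zA axz.
have C1 : forall m, 0 < m < size os -> nth false os m.-1 && ~~ nth false os m -> nth a s m \in A.
  by move=> m Hm Hcol; have := Hc m a Hm; rewrite jnP Hcol; exact: AnZA.
have C2 : forall m, m <= size os -> nth a s m \in A.
  move=> m Hm.
  have [->|m0] := posnP m; first by rewrite h0.
  have [mk|mk] := eqVneq m (size os); first by rewrite mk hk.
  have Hm' : 0 < m < size os by lia.
  case Hcol: (nth false os m.-1 && ~~ nth false os m); first exact: C1.
  case Hom: (nth false os m).
    have [p [Hp1 Hp2 Hp3 Hp4]] := chainR a Wf0 (leqnn _) (erefl _) (ltac:(lia) : m < size os) Hom.
    apply: Acl Hp2; case: Hp4 => [->|[Hpk Hnp]]; first by rewrite hk.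
    by apply: C1; [lia | rewrite Hp3 Hnp].
  have Hom1 : ~~ nth false os m.-1 by move: Hcol; rewrite Hom andbT => ->.
  have [p [Hp1 Hp2 Hp3 Hp4]] := chainL a Wf0 (ltnW (ltac:(lia) : m < size os)) m0 Hom1.
  apply: Acl Hp2; case: Hp4 => [->|[Hp0 Hnp]]; first by rewrite h0.
  by apply: C1; [lia | rewrite Hnp Hp3].
have C3 : forall m, 0 < m < size os -> nth false os m.-1 && ~~ nth false os m.
  move=> m Hm; apply/negPn/negP => Hcol.
  have := Hc m a Hm; rewrite jnP (negbTE Hcol) HZ !inE C2 ?andbT; last by lia.
  have ma : nth a s m != a.
    by rewrite -{2}h0 nth_uniq // ?sz; lia.
  have mc : nth a s m != c.
    by rewrite -hk nth_uniq // ?sz; lia.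
  by rewrite (negbTE ma) (negbTE mc).
case Hk: (size os) => [|[|[|k]]].
- by move: hk; rewrite Hk h0 => eac; rewrite eac eqxx in ac.
- have := He 0 a; rewrite Hk edgP => /(_ isT); move: hk; rewrite Hk => -> /=.
  by case: (nth false os 0) => ?; [constructor 1 | constructor 2].
- have := C3 1; rewrite Hk => /(_ isT) /= /andP[o0 o1].
  constructor 3; exists (nth a s 1).
  rewrite C2 ?Hk //=.
  have := He 0 a; rewrite Hk edgP o0 => /(_ isT) /= -> /=.
  have := He 1 a; rewrite Hk edgP (negbTE o1) => /(_ isT).
  by move: hk; rewrite Hk /= => ->.
- have := C3 1; rewrite Hk => /(_ isT) /= /andP[_ o1].
  have := C3 2; rewrite Hk => /(_ isT) /= /andP[o1' _].
  by rewrite o1' in o1.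
Qed.

Lemma noAnZ d w : ~~ AnZ d -> ancestor E d w -> w \notin Z.
Proof.
move=> nA adw; apply/negP => wZ; move/negP: nA; apply.
by apply/existsP; exists w; rewrite wZ.
Qed.

Lemma pa_walk x y : p_adjacent E x y -> x \notin Z -> y \notin Z -> exists vs os, W x vs os y.
Proof.
move=> /andP[_ /or3P[exy|eyx|/existsP[d /and3P[exd eyd ad]]]] xZ yZ.
- by exists [:: y], [:: true]; apply: W_cons => //; apply: W_nil.
- by exists [:: y], [:: false]; apply: W_cons => //; apply: W_nil.
have Wdy : W d [:: y] [:: false] y by apply: W_cons => //; apply: W_nil.
have [hA|hA] := boolP (AnZ d).
  exists [:: d; y], [:: true; false]; apply: W_cons => //.
have dZ : d \notin Z by apply: noAnZ hA (connect0 _ _).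
case/orP: ad => /connectP [p pp lp].
- have [os W1 Hn] := dir_bwd pp (fun w wp => noAnZ hA (path_connect pp (@mem_behead _ (_ :: p) _ wp))).
  rewrite -lp in W1.
  exists (rev (belast d p) ++ [:: y]), (os ++ [:: false]).
  apply: W_cat W1 Wdy _ => s1 _; rewrite jnP.
  have : last false os \in false :: os by exact: mem_last.
  have : all negb (false :: os) by rewrite /= Hn.
  by move=> /allP H /H /negbTE -> /=.
- have W2 := dir_fwd pp (fun w wp => noAnZ hA (path_connect pp (@mem_behead _ (_ :: p) _ wp))).
  rewrite -lp in W2.
  exists (d :: p), (true :: nseq (size p) true).
  apply: W_cons => // Hs; rewrite size_nseq in Hs; by rewrite nth_nseq Hs jnP.
Qed.

Lemma cond_walk a b c : p_adjacent E a b -> p_adjacent E b c -> ancestor E b a ->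
  a \notin Z -> b \notin Z -> c \notin Z -> exists vs os, W a vs os c.
Proof.
move=> pab pbc aba aZ bZ cZ.
have [vs2 [os2 W2]] := pa_walk pbc bZ cZ.
have [hA|hA] := boolP (AnZ b).
  have [vs1 [os1 W1]] := pa_walk pab aZ bZ.
  exists (vs1 ++ vs2), (os1 ++ os2); apply: W_cat W1 W2 _ => _ _.
  by rewrite jnP hA; case: ifP.
case/connectP: aba => p pp lp.
have [os W1 Hn] := dir_bwd pp (fun w wp => noAnZ hA (path_connect pp (@mem_behead _ (_ :: p) _ wp))).
rewrite -lp in W1.
exists (rev (belast b p) ++ vs2), (os ++ os2).
apply: W_cat W1 W2 _ => s1 _; rewrite jnP.
have : last false os \in false :: os by exact: mem_last.
have : all negb (false :: os) by rewrite /= Hn.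
by move=> /allP H /H /negbTE -> /=.
Qed.
End Walks.

Section Main.
Variable T : finType.
Variable E : rel T.
Implicit Types (a b c x y : T) (t : ppo T).

Lemma pbT (P : Prop) : P -> pb P = true.
Proof. by rewrite /pb; case: excluded_middle_informative. Qed.

Lemma pbP (P : Prop) : pb P = true -> P.
Proof. by rewrite /pb; case: excluded_middle_informative. Qed.

Lemma nndcon Z a b : ~ d_separated E Z a b -> d_connected E Z a b.
Proof.
move=> H; case: (excluded_middle_informative (d_connected E Z a b)) => // H'.
Qed.

Lemma pa_sym1 a b : p_adjacent E a b -> p_adjacent E b a.
Proof.
move=> /andP[ab /or3P[h|h|/existsP[d /and3P[h1 h2 h3]]]]; rewrite /p_adjacent eq_sym ab /=.
- by rewrite h orbT.
- by rewrite h.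
- by apply/orP; right; apply/orP; right; apply/existsP; exists d; rewrite h1 h2 orbC h3.
Qed.

Lemma pa_sym a b : p_adjacent E a b = p_adjacent E b a.
Proof. by apply/idP/idP => /pa_sym1. Qed.

Definition PAs : {set T * T} := [set p | p_adjacent E p.1 p.2].

Definition UCs : {set T * T * T} :=
  [set t : T * T * T | let: (a, b, c) := t in
     [&& a != b, b != c, a != c, p_adjacent E a b, p_adjacent E c b,
         ~~ p_adjacent E a c & ancestor E b a || ancestor E b c]].

Lemma pa_E1 t a b : p_adjacent E a b -> (a, b) \in E1 E t.
Proof.
move=> pab; rewrite inE /=.
have ab : a != b by case/andP: pab.
rewrite ab /=; apply: pbT => H; apply: H.
have [vs [os Hw]] := @pa_walk _ E (below t [:: a; b] :\: [set a; b]) _ _ pab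
  ltac:(by rewrite !inE eqxx) ltac:(by rewrite !inE eqxx orbT).
exact: dcon_of_W Hw.
Qed.

Lemma PAs_E1 t : PAs \subset E1 E t.
Proof. by apply/subsetP => [[a b]]; rewrite inE /= => /pa_E1. Qed.

Lemma sccE x z : (z \in scc E x) = ancestor E x z && ancestor E z x.
Proof. by rewrite inE. Qed.

Lemma scc_eq x y : ancestor E x y -> ancestor E y x -> scc E x = scc E y.
Proof.
move=> xy yx; apply/setP => z; rewrite !sccE.
apply/andP/andP => [] [h1 h2]; split.
- exact: connect_trans yx h1.
- exact: connect_trans h2 xy.
- exact: connect_trans xy h1.
- exact: connect_trans h2 yx.
Qed.

Lemma g1_part : partition (graph_ppo E).1 [set: T].
Proof.
have eqR : {in [set: T] & &, equivalence_rel (fun x y => ancestor E x y && ancestor E y x)}.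
  move=> x y z _ _ _; split; first by rewrite /ancestor connect0.
  move=> /andP[xy yx]; apply/andP/andP => [] [h1 h2]; split.
  - exact: connect_trans yx h1.
  - exact: connect_trans h2 xy.
  - exact: connect_trans xy h1.
  - exact: connect_trans h2 yx.
have := equivalence_partitionP eqR.
congr partition; apply/setP => C; apply/imsetP/imsetP => [] [x _ ->]; exists x => //;
  by apply/setP => z; rewrite !inE.
Qed.

Lemma g1_triv : trivIset (graph_ppo E).1.
Proof. by case/and3P: g1_part. Qed.

Lemma scc_in x : scc E x \in (graph_ppo E).1.
Proof. exact: imset_f. Qed.

Lemma scc_self x : x \in scc E x.
Proof. by rewrite sccE /ancestor connect0. Qed.

Lemma pblock_g x : pblock (graph_ppo E).1 x = scc E x.
Proof. exact: def_pblock g1_triv (scc_in x) (scc_self x). Qed.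

Lemma g1P C : reflect (exists x, C = scc E x) (C \in (graph_ppo E).1).
Proof. by apply: (iffP imsetP) => [[x _ ->]|[x ->]]; exists x. Qed.

Lemma ord_g x y : ((scc E x, scc E y) \in (graph_ppo E).2) = ancestor E x y.
Proof.
rewrite inE /= !scc_in /=; apply/existsP/idP => [[u /andP[ux /existsP[v /andP[vy uv]]]]|xy].
  move: ux vy; rewrite !sccE => /andP[xu _] /andP[_ vy].
  exact: connect_trans (connect_trans xu uv) vy.
by exists x; rewrite scc_self; apply/existsP; exists y; rewrite scc_self.
Qed.

Lemma ord_pb x y : ((pblock (graph_ppo E).1 x, pblock (graph_ppo E).1 y) \in (graph_ppo E).2) = ancestor E x y.
Proof. by rewrite !pblock_g ord_g. Qed.

Lemma below_g x xs : (x \in below (graph_ppo E) xs) = has (fun y => ancestor E x y) xs.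
Proof.
apply/bigcupP/hasP => [[C /andP[/g1P[w ->] /hasP[y yxs]]]|[y yxs xy]].
  rewrite pblock_g ord_g => wy; rewrite sccE => /andP[_ xw].
  by exists y => //; exact: connect_trans xw wy.
exists (scc E x); last exact: scc_self.
by rewrite scc_in /=; apply/hasP; exists y => //; rewrite pblock_g ord_g.
Qed.

Lemma is_ppo_g : is_ppo (graph_ppo E).
Proof.
split.
- exact: g1_part.
- by move=> C1 C2; rewrite inE /= => /and3P[-> -> _].
- by move=> C /g1P[x ->]; rewrite ord_g /ancestor connect0.
- move=> C1 C2 H1 H2.
  move: (H1); rewrite inE /= => /and3P[/g1P[x ex] /g1P[y ey] _]; subst.
  by rewrite ord_g in H1; rewrite ord_g in H2; exact: scc_eq.
- move=> C1 C2 C3 H1 H2.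
  move: (H1); rewrite inE /= => /and3P[/g1P[x ex] /g1P[y ey] _]; subst.
  move: (H2); rewrite inE /= => /and3P[_ /g1P[z ez] _]; subst.
  rewrite ord_g in H1; rewrite ord_g in H2; rewrite ord_g.
  exact: connect_trans H1 H2.
Qed.


Lemma below_g_cl xs x y : y \in below (graph_ppo E) xs -> ancestor E x y -> x \in below (graph_ppo E) xs.
Proof.
rewrite !below_g => /hasP[z zxs yz] xy; apply/hasP; exists z => //.
exact: connect_trans xy yz.
Qed.

Lemma cc_pa a c d : E a d -> E c d -> ancestor E d a || ancestor E d c -> a != c -> p_adjacent E a c.
Proof.
move=> h1 h2 h3 ac; rewrite /p_adjacent ac /=.
by apply/orP; right; apply/orP; right; apply/existsP; exists d; rewrite h1 h2 h3.
Qed.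

Lemma E1g : E1 E (graph_ppo E) = PAs.
Proof.
apply/eqP; rewrite eqEsubset PAs_E1 andbT; apply/subsetP => [[a b]].
rewrite !inE /= => /andP[ab /pbP /nndcon H].
have aA : a \in below (graph_ppo E) [:: a; b] by rewrite below_g /= /ancestor connect0.
have bA : b \in below (graph_ppo E) [:: a; b] by rewrite below_g /= /ancestor connect0 orbT.
case: (@sep_anc _ E _ (below (graph_ppo E) [:: a; b]) a b (@below_g_cl _) aA bA ab erefl H).
- by move=> h; rewrite /p_adjacent ab h.
- by move=> h; rewrite /p_adjacent ab h orbT.
- move=> [d /and3P[dA h1 h2]]; apply: (cc_pa h1 h2) => //.
  by move: dA; rewrite below_g /= orbF.
Qed.

Lemma E2g : E2 E (graph_ppo E) = UCs.
Proof.
by apply/setP => [[[a b] c]]; rewrite /E2 /UCs E1g in_set [X in _ = X]in_set /= !ord_pb !inE.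
Qed.

Lemma E3g_sub : E3 E (graph_ppo E) \subset unshielded_perfect_nonconductors E.
Proof.
apply/subsetP => [[[a b] c]]; rewrite /E3 E1g !inE /=.
move=> /and5P[ab bc ac pab /andP[pcb /andP[npac /pbP /nndcon H]]].
set A := below (graph_ppo E) [:: a; b; c].
have aA : a \in A by rewrite below_g /= /ancestor connect0.
have cA : c \in A by rewrite below_g /= /ancestor connect0 !orbT.
rewrite ac npac pab pcb /=.
case: (@sep_anc _ E _ A a c (@below_g_cl _) aA cA ac erefl H).
- by move=> h; move: npac; rewrite /p_adjacent ac h.
- by move=> h; move: npac; rewrite /p_adjacent ac h orbT.
move=> [d /and3P[dA h1 h2]].
move: dA; rewrite below_g /= orbF.
have nda : ~~ ancestor E d a.
  by apply/negP => h; move: npac; rewrite (cc_pa h1 h2) ?h.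
have ndc : ~~ ancestor E d c.
  by apply/negP => h; move: npac; rewrite (cc_pa h1 h2) ?h ?orbT.
rewrite (negbTE nda) (negbTE ndc) orbF /= => db.
apply/andP; split.
  apply/negP => /orP[h|h].
  - by move: nda; rewrite /ancestor (connect_trans db h).
  - by move: ndc; rewrite /ancestor (connect_trans db h).
by apply/existsP; exists d; rewrite h1 h2 db.
Qed.

Lemma blw t x xs : is_ppo t -> x \in below t xs ->
  has (fun y => (pblock t.1 x, pblock t.1 y) \in t.2) xs.
Proof.
move=> [pt _ _ _ _] /bigcupP[C /andP[Ct hs] xC].
have [_ tri _] := and3P pt.
by rewrite (def_pblock tri Ct xC).
Qed.

Lemma below_mem t x xs : is_ppo t -> x \in xs -> x \in below t xs.
Proof.
move=> [pt _ refl _ _] xxs.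
have [/eqP cov _ _] := and3P pt.
have xc : x \in cover t.1 by rewrite cov inE.
apply/bigcupP; exists (pblock t.1 x); last by rewrite mem_pblock.
rewrite pblock_mem //=; apply/hasP; exists x => //.
by apply: refl; rewrite pblock_mem.
Qed.

Lemma UC_E2 t : is_ppo t -> E1 E t = PAs -> UCs \subset E2 E t.
Proof.
move=> pt E1t; apply/subsetP => [[[a b] c]]; rewrite /E2 E1t !inE /=.
move=> /and5P[ab bc ac pab /andP[pcb /andP[npac ancb]]].
rewrite ab bc ac /= pab pcb npac /=.
apply/negPn/negP => Hn.
case/orP: ancb => h.
- set Z := below t [:: a; c] :\: [set a; c].
  have bZ : b \notin Z.
    rewrite !inE negb_and; apply/orP; right; apply/negP => /(blw pt).
    by rewrite /= orbF => H'; rewrite H' in Hn.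
  have aZ : a \notin Z by rewrite !inE eqxx.
  have cZ : c \notin Z by rewrite !inE eqxx orbT.
  have [vs [os Hw]] := @cond_walk _ E Z a b c pab (pa_sym1 pcb) h aZ bZ cZ.
  have : (a, c) \in E1 E t.
    rewrite inE /= ac /=; apply: pbT => Hs; apply: Hs; exact: dcon_of_W Hw.
  by rewrite E1t inE /= (negbTE npac).
- set Z := below t [:: c; a] :\: [set c; a].
  have bZ : b \notin Z.
    rewrite !inE negb_and; apply/orP; right; apply/negP => /(blw pt).
    by rewrite /= orbF orbC => H'; rewrite H' in Hn.
  have aZ : a \notin Z by rewrite !inE eqxx orbT.
  have cZ : c \notin Z by rewrite !inE eqxx.
  have [vs [os Hw]] := @cond_walk _ E Z c b a pcb (pa_sym1 pab) h cZ bZ aZ.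
  have : (c, a) \in E1 E t.
    rewrite inE /= eq_sym ac /=; apply: pbT => Hs; apply: Hs; exact: dcon_of_W Hw.
  by rewrite E1t inE /= pa_sym (negbTE npac).
Qed.

Lemma UPNC_E3 t : is_ppo t -> E1 E t = PAs -> unshielded_perfect_nonconductors E \subset E3 E t.
Proof.
move=> pt E1t; apply/subsetP => [[[a b] c]]; rewrite /E3 E1t !inE /=.
move=> /and5P[ac npac pab pcb /andP[nanc /existsP[d /and3P[ead ecd adb]]]].
have ab : a != b by case/andP: pab.
have bc : b != c by rewrite eq_sym; case/andP: pcb.
rewrite ab bc ac pab pcb npac /=.
apply: pbT => Hs; apply: Hs.
set Z := below t [:: a; b; c] :\: [set a; c].
apply: (@dcon_of_W _ E Z a [:: d; c] [:: true; false] c).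
apply: W_cons => //.
  by apply: W_cons => //; apply: W_nil.
move=> _; rewrite jnP /=; apply/existsP; exists b; rewrite adb andbT.
rewrite /Z in_setD in_set2 negb_or [b == a]eq_sym (negbTE ab) (negbTE bc) /=.
by apply: below_mem; rewrite // !inE eqxx orbT.
Qed.

Lemma E3g : E3 E (graph_ppo E) = unshielded_perfect_nonconductors E.
Proof.
by apply/eqP; rewrite eqEsubset E3g_sub (UPNC_E3 is_ppo_g E1g).
Qed.

Lemma S1_g : S1 E (graph_ppo E).
Proof.
split; first exact: is_ppo_g.
by move=> t _; rewrite E1g; apply: subset_leq_card; apply: PAs_E1.
Qed.

Lemma S1_E1 t : S1 E t -> E1 E t = PAs.
Proof.
move=> [pt Hm]; have := Hm _ is_ppo_g; rewrite E1g => Hc.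
by apply/eqP; rewrite eq_sym eqEcard PAs_E1 Hc.
Qed.

Lemma S2_g : S2 E (graph_ppo E).
Proof.
split; first exact: S1_g.
move=> t Ht; rewrite E2g; apply: subset_leq_card; apply: UC_E2.
  by case: Ht.
exact: S1_E1.
Qed.

Lemma S3_g : S3 E (graph_ppo E).
Proof.
split; first exact: S2_g.
move=> t [Ht _]; rewrite E3g; apply: subset_leq_card; apply: UPNC_E3.
  by case: Ht.
exact: S1_E1.
Qed.

Lemma S3_E3 s : S3 E s -> E3 E s = unshielded_perfect_nonconductors E.
Proof.
move=> [[Hs1 _] Hm]; have := Hm _ S2_g; rewrite E3g => Hc.
apply/eqP; rewrite eq_sym eqEcard Hc andbT; apply: UPNC_E3.
  by case: Hs1.
exact: S1_E1.
Qed.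

End Main.

Theorem proposition3p10 (n : nat) (hn : 1 <= n) (E : rel 'I_n) :
  S3 E (graph_ppo E) /\
  (forall s : ppo 'I_n, S3 E s -> E3 E s = unshielded_perfect_nonconductors E).
Proof.
split; first exact: S3_g.
exact: S3_E3.
Qed.
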